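(* Let $\eta=i\pi Q/P$ with positive integers $Q<P$, let $\kappa\in\mathbb{C}$, $n\ge P$, and let $\lambda_1,\dots,\lambda_n,\mu_1,\dots,\mu_n\in\mathbb{C}$ be such that all entries of $\Omega_\kappa(\{\lambda\},\{\mu\}|\{\lambda\})$ are finite. Suppose there are distinct indices $a_1,\dots,a_P$ with $\sinh(\lambda_{a_{j+1}}-\lambda_{a_j}+\eta)=0$ for $j=1,\dots,P$, where $a_{P+1}:=a_1$. Then $\det_n\Omega_\kappa(\{\lambda\},\{\mu\}|\{\lambda\})=0$.
   Context: $\xi_1,\dots,\xi_M\in\mathbb{C}$ are fixed; $a(\lambda)=\prod_{j=1}^M\sinh(\lambda-\xi_j+\eta)$, $d(\lambda)=\prod_{j=1}^M\sinh(\lambda-\xi_j)$, $t(\lambda,\mu)=\frac{\sinh\eta}{\sinh(\lambda-\mu)\sinh(\lambda-\mu+\eta)}$. For sets $\{\lambda_1..\lambda_n\}$, $\{\mu_1..\mu_n\}$, $\{\nu_1..\nu_{n'}\}$, $\Omega_\kappa(\{\lambda\},\{\mu\}|\{\nu\})$ is the $n\times n$ matrix with entries $(\Omega_\kappa)_{jk}=a(\mu_k)t(\lambda_j,\mu_k)\prod_{c=1}^{n'}\sinh(\nu_c-\mu_k+\eta)-\kappa\,d(\mu_k)t(\mu_k,\lambda_j)\prod_{c=1}^{n'}\sinh(\nu_c-\mu_k-\eta)$. *)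

(* Defs.v *)
From HB Require Import structures.
From mathcomp Require Import all_boot all_order all_algebra.
From mathcomp Require Import all_classical all_reals all_analysis.
From mathcomp Require Import complex.
Set Implicit Arguments. Unset Strict Implicit. Unset Printing Implicit Defensive.
Import Order.TTheory GRing.Theory Num.Theory.
Local Open Scope ring_scope.
Local Open Scope complex_scope.

Definition Csinh (R : realType) (z : R[i]) : R[i] :=
  let: x +i* y := z in
  ((expR x - expR (- x)) / 2 * cos y) +i* ((expR x + expR (- x)) / 2 * sin y).

Definition afun (R : realType) (M : nat) (xi : 'I_M -> R[i]) (eta l : R[i]) : R[i] :=
  \prod_(j < M) Csinh (l - xi j + eta).
Definition dfun (R : realType) (M : nat) (xi : 'I_M -> R[i]) (l : R[i]) : R[i] :=
  \prod_(j < M) Csinh (l - xi j).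

Definition tfun (R : realType) (eta l m : R[i]) : R[i] :=
  Csinh eta / (Csinh (l - m) * Csinh (l - m + eta)).

Definition Omega (R : realType) (M : nat) (xi : 'I_M -> R[i]) (eta kappa : R[i])
  (n n' : nat) (lam mu : 'I_n -> R[i]) (nu : 'I_n' -> R[i]) : 'M[R[i]]_n :=
  \matrix_(j < n, k < n)
    (afun xi eta (mu k) * tfun eta (lam j) (mu k)
       * \prod_(c < n') Csinh (nu c - mu k + eta)
     - kappa * dfun xi (mu k) * tfun eta (mu k) (lam j)
       * \prod_(c < n') Csinh (nu c - mu k - eta)).

Definition eta_QP (R : realType) (Q P : nat) : R[i] :=
  0 +i* (pi * Q%:R / P%:R).

(* Main.v *)
Require Import Defs.
From HB Require Import structures.
From mathcomp Require Import all_boot all_order all_algebra.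
From mathcomp Require Import all_classical all_reals all_analysis.
From mathcomp Require Import complex.
From mathcomp Require Import ring lra.
Import Order.TTheory GRing.Theory Num.Theory.
Local Open Scope ring_scope.
Local Open Scope complex_scope.
Set Implicit Arguments. Unset Strict Implicit.



Set Implicit Arguments. Unset Strict Implicit.




Definition Ccosh (R : realType) (z : R[i]) : R[i] :=
  let: x +i* y := z in
  ((expR x + expR (- x)) / 2 * cos y) +i* ((expR x - expR (- x)) / 2 * sin y).
Lemma CsinhB (R : realType) (u v : R[i]) :
  Csinh (u - v) = Csinh u * Ccosh v - Ccosh u * Csinh v.
Proof.
case: u => x1 y1; case: v => x2 y2.
rewrite /Csinh /Ccosh /=.
apply/eqP; rewrite eq_complex /=; apply/andP; split; apply/eqP.
all: rewrite ?opprB ?expRB ?expRN ?cosB ?sinB.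
all: have e1 : expR x1 != 0 by rewrite gt_eqF ?expR_gt0.
all: have e2 : expR x2 != 0 by rewrite gt_eqF ?expR_gt0.
all: field; rewrite ?e1 ?e2 ?pnatr_eq0 //.
Qed.

Definition gco (R : realType) (z : R[i]) : R[i] := Ccosh z / Csinh z.

Lemma gdiff (R : realType) (u v : R[i]) : Csinh u != 0 -> Csinh v != 0 ->
  Csinh (u - v) / (Csinh u * Csinh v) = gco v - gco u.
Proof. move=> hu hv; rewrite CsinhB /gco; field; by rewrite hu hv. Qed.

Lemma gcong (R : realType) (w v : R[i]) : Csinh w != 0 -> Csinh v != 0 ->
  Csinh (v - w) = 0 -> gco w = gco v.
Proof.
move=> hw hv h0; apply/eqP; rewrite -subr_eq0 -gdiff // h0 mul0r //.
Qed.

Lemma t_eq (R : realType) (e l m : R[i]) : Csinh (l - m) != 0 ->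
  Csinh (l - m + e) != 0 -> tfun e l m = gco (l - m) - gco (l - m + e).
Proof.
move=> h1 h2; have He : l - m + e - (l - m) = e by ring.
by rewrite /tfun -gdiff // He [X in _ = _ / X]mulrC.
Qed.

Lemma nz2 (R : realType) (x y : R[i]) : x * y != 0 -> x != 0 /\ y != 0.
Proof. by rewrite mulf_eq0 negb_or => /andP. Qed.

Theorem mainTheorem5 (R : realType) (M : nat) (xi : 'I_M -> R[i])
  (Q P : nat) (hQ : (0 < Q)%N) (hQP : (Q < P)%N)
  (kappa : R[i]) (n : nat) (hn : (P <= n)%N)
  (lam mu : 'I_n -> R[i])
  (hfin : forall j k : 'I_n,
     Csinh (lam j - mu k) * Csinh (lam j - mu k + eta_QP R Q P) != 0 /\
     Csinh (mu k - lam j) * Csinh (mu k - lam j + eta_QP R Q P) != 0)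
  (a : 'I_P -> 'I_n) (ha : injective a)
  (hcyc : forall j : 'I_P,
     Csinh (lam (a (ordS j)) - lam (a j) + eta_QP R Q P) = 0) :
  \det (Omega xi (eta_QP R Q P) kappa lam mu lam) = 0.
Proof.
set e := eta_QP R Q P in hfin hcyc *.
have hP : (0 < P)%N by apply: leq_trans hQ (ltnW hQP).
pose i0 : 'I_P := Ordinal hP.
have S1 : forall k, \sum_(i < P) tfun e (lam (a i)) (mu k) = 0.
  move=> k.
  have -> : \sum_(i < P) tfun e (lam (a i)) (mu k) =
     \sum_(i < P) (gco (lam (a (ordS i)) - mu k + e) - gco (lam (a i) - mu k + e)).
    apply: eq_bigr => i _.
    have [/nz2 [h1 h2] _] := hfin (a i) k.
    have [/nz2 [h3 h4] _] := hfin (a (ordS i)) k.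
    rewrite t_eq //; congr (_ - _); apply: gcong => //.
    by have -> : lam (a (ordS i)) - mu k + e - (lam (a i) - mu k) =
       lam (a (ordS i)) - lam (a i) + e by ring.
  rewrite sumrB; apply/eqP; rewrite subr_eq0; apply/eqP.
  by rewrite [RHS](reindex_inj (@ordS_inj P)).
have S2 : forall k, \sum_(i < P) tfun e (mu k) (lam (a i)) = 0.
  move=> k.
  have -> : \sum_(i < P) tfun e (mu k) (lam (a i)) =
     \sum_(i < P) (gco (mu k - lam (a i)) - gco (mu k - lam (a (ordS i)))).
    apply: eq_bigr => i _.
    have [_ /nz2 [h1 h2]] := hfin (a i) k.
    have [_ /nz2 [h3 h4]] := hfin (a (ordS i)) k.
    rewrite t_eq //; congr (_ - _); symmetry; apply: gcong => //.
    by have -> : mu k - lam (a i) + e - (mu k - lam (a (ordS i))) =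
       lam (a (ordS i)) - lam (a i) + e by ring.
  rewrite sumrB; apply/eqP; rewrite subr_eq0; apply/eqP.
  by rewrite [LHS](reindex_inj (@ordS_inj P)).
apply/eqP/det0P.
exists (\row_j \sum_(i < P) ((a i == j)%:R : R[i])).
  apply/negP => /eqP/rowP/(_ (a i0)); rewrite !mxE (bigD1 i0) //= eqxx.
  rewrite big1 ?addr0; first by move/eqP; rewrite oner_eq0.
  by move=> i hi; rewrite (inj_eq ha) (negbTE hi).
apply/rowP => k; rewrite !mxE.
under eq_bigr => j _ do rewrite mxE mulr_suml.
rewrite exchange_big /=.
have -> : \sum_(i < P) \sum_(j < n) (a i == j)%:R *
     Omega xi e kappa lam mu lam j k = \sum_(i < P) Omega xi e kappa lam mu lam (a i) k.
  apply: eq_bigr => i _; rewrite (bigD1 (a i)) //= eqxx mul1r big1 ?addr0 //.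
  by move=> j hj; rewrite eq_sym (negbTE hj) mul0r.
under eq_bigr => i _ do rewrite mxE.
rewrite sumrB -!mulr_suml -2!mulr_sumr S1 S2.
by rewrite !mulr0 !mul0r subrr.
Qed.
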